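(* For all sufficiently large natural numbers $n$, the number of primes smaller than $n$ is greater than the number of SP numbers smaller than $n$.
   Context: A Square-Prime (SP) number is a positive integer of the form $p a^2$ where $p$ is a prime and $a \ge 2$ is a natural number (i.e. $a \neq 1$). *)

(* Defs.v *)
From mathcomp Require Import all_boot.

(* A Square-Prime (SP) number is a positive integer of the form p * a^2 with
   p prime and a >= 2.  Since such m satisfies p <= m and a <= m, the
   existential quantifiers can be bounded, giving a boolean predicate. *)
Definition is_SP (m : nat) : bool :=
  [exists p : 'I_m.+1, exists a : 'I_m.+1,
     [&& prime p, 2 <= a & m == p * a ^ 2]].

Lemma is_SPP (m : nat) :
  reflect (exists p a, [/\ prime p, 2 <= a & m = p * a ^ 2]) (is_SP m).
Proof.
apply: (iffP existsP).
  move=> [p /existsP [a /and3P [Hp Ha /eqP Hm]]].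
  by exists p, a.
move=> [p [a [Hp Ha Hm]]].
have Hp0 : 0 < p by apply: prime_gt0.
have Hpm : p < m.+1.
  rewrite ltnS Hm -{1}(muln1 p) leq_mul2l expn_gt0; apply/orP; right.
  by case: a Ha {Hm}.
have Ham : a < m.+1.
  rewrite ltnS Hm; apply: (@leq_trans (a ^ 2)).
    by rewrite -{1}(expn1 a) leq_pexp2l //; apply: leq_trans Ha.
  by rewrite -{1}(mul1n (a ^ 2)) leq_mul2r Hp0 orbT.
exists (Ordinal Hpm); apply/existsP; exists (Ordinal Ham) => /=.
by rewrite Hp Ha Hm eqxx.
Qed.

Definition prime_count (n : nat) : nat := #|[pred m : 'I_n | prime m]|.
Definition SP_count (n : nat) : nat := #|[pred m : 'I_n | is_SP m]|.

(* Main.v *)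
From Stdlib Require Import Reals Lra Lia Psatz.
From HB Require Import structures.
Require Import Defs.
From mathcomp Require Import all_boot zify.

(* Proof: Chebyshev-type bounds on psi via (30m)! m! / ((15m)! (10m)! (6m)!),
   then comparison of #SP(n) <= sum_a pi(n/a^2) with pi(n). *)


Definition Fq q := q + q %/ 30 - (q %/ 2 + q %/ 3 + q %/ 5).

Lemma F_aux q : q %/ 2 + q %/ 3 + q %/ 5 <= q + q %/ 30 <= q %/ 2 + q %/ 3 + q %/ 5 + 1.
Proof. lia. Qed.

Lemma F_1 q : 0 < q <= 5 -> Fq q = 1.
Proof. rewrite /Fq; lia. Qed.

Lemma F_eq q : q + q %/ 30 = q %/ 2 + q %/ 3 + q %/ 5 + Fq q.
Proof. have := F_aux q; rewrite /Fq; lia. Qed.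
Lemma F_le1 q : Fq q <= 1.
Proof. have := F_aux q; rewrite /Fq; lia. Qed.
Lemma F_0 : Fq 0 = 0.
Proof. by []. Qed.

Lemma sum_ext_div N x p : 1 < p -> N <= x ->
  \sum_(1 <= k < N.+1) N %/ p ^ k = \sum_(1 <= k < x.+1) N %/ p ^ k.
Proof.
move=> p1 Nx; rewrite [RHS](big_cat_nat _ (n := N.+1)) //= ?ltnS //.
rewrite [X in _ = _ + X]big1_seq ?addn0 //.
move=> k /andP[_]; rewrite mem_index_iota => /andP[Hk _].
apply: divn_small; exact: leq_trans Hk (ltnW (ltn_expl _ p1)).
Qed.

Lemma legendre_x N x p : prime p -> N <= x ->
  logn p N`! = \sum_(1 <= k < x.+1) N %/ p ^ k.
Proof. move=> pp Nx; rewrite logn_fact //; exact: sum_ext_div (prime_gt1 pp) Nx. Qed.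

Lemma sum_le_t x t : \sum_(1 <= k < x.+1) (k <= t) = minn x t.
Proof.
elim: x => [|x IH]; first by rewrite big_geq // min0n.
rewrite big_nat_recr //= IH.
by case: (leqP x.+1 t) => H; lia.
Qed.

Lemma pow_le_trunc p y k : 1 < p -> 0 < k -> (p ^ k <= y) = (k <= trunc_log p y).
Proof.
move=> p1 k0; apply/idP/idP => [H|H]; first exact: trunc_log_max.
case: y H => [|y] H.
  by rewrite trunc_log0 in H; lia.
apply: leq_trans (trunc_logP p1 (isT : 0 < y.+1)).
by rewrite leq_exp2l.
Qed.

Lemma trunc_log_le p y : 1 < p -> trunc_log p y <= y.
Proof.
move=> p1; case: y => [|y]; first by rewrite trunc_log0.
apply: leq_trans (trunc_logP p1 (isT : 0 < y.+1)).
exact: ltnW (ltn_expl _ p1).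
Qed.

Lemma sum_pow_le p x y : 1 < p -> y <= x ->
  \sum_(1 <= k < x.+1) (p ^ k <= y) = trunc_log p y.
Proof.
move=> p1 yx.
rewrite (eq_big_nat _ _ (F2 := fun k => nat_of_bool (k <= trunc_log p y))); last first.
  by move=> k /andP[k1 _]; rewrite pow_le_trunc.
rewrite sum_le_t; have := @trunc_log_le p y p1; lia.
Qed.

Definition Gp p m := \sum_(1 <= k < (30 * m).+1) Fq ((30 * m) %/ p ^ k).

Lemma div_c x c d : x %/ d %/ c = (x %/ c) %/ d.
Proof. by rewrite -!divnMA mulnC. Qed.

Lemma legendre_combo p m : prime p ->
  logn p (30 * m)`! + logn p m`! =
  logn p (15 * m)`! + logn p (10 * m)`! + logn p (6 * m)`! + Gp p m.
Proof.
move=> pp.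
have E : forall c d, c * d = 30 ->
   logn p (c * m)`! = \sum_(1 <= k < (30 * m).+1) ((30 * m) %/ p ^ k) %/ d.
  move=> c d cd.
  have d0 : 0 < d by case: d cd => //; rewrite muln0.
  have cle : c * m <= 30 * m by rewrite -cd leq_mul2r; apply/orP; right; rewrite leq_pmulr.
  rewrite (@legendre_x _ _ p pp cle).
  apply: eq_bigr => k _; rewrite div_c -cd mulnAC mulnK //.
rewrite (E 30 1) // (E 15 2) // (E 10 3) // (E 6 5) //.
rewrite (@legendre_x _ (30 * m) p pp (_ : m <= 30 * m)); last by lia.
rewrite /Gp -!big_split /=.
apply: eq_bigr => k _; rewrite divn1 -F_eq; congr (_ + _).
by rewrite div_c mulKn.
Qed.

Lemma G_le p m : prime p -> Gp p m <= trunc_log p (30 * m).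
Proof.
move=> pp; have p1 := prime_gt1 pp.
rewrite -(@sum_pow_le p _ _ p1 (leqnn (30 * m))) /Gp.
apply: leq_sum => k _.
case: (leqP (p ^ k) (30 * m)) => H /=; first exact: F_le1.
by rewrite divn_small.
Qed.

Lemma G_ge p m : prime p -> trunc_log p (30 * m) <= Gp p m + trunc_log p (5 * m).
Proof.
move=> pp; have p1 := prime_gt1 pp.
rewrite -(@sum_pow_le p _ _ p1 (leqnn (30 * m))) -(@sum_pow_le p _ _ p1 (_ : 5 * m <= 30 * m)); last by lia.
rewrite /Gp -big_split /=; apply: leq_sum => k _.
case: (leqP (p ^ k) (5 * m)) => H5.
  by apply: leq_trans (leq_b1 _) (leq_addl _ _).
case: (leqP (p ^ k) (30 * m)) => H30 //=.
have pk0 : 0 < p ^ k by rewrite expn_gt0 prime_gt0.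
rewrite F_1 //; apply/andP; split.
  by rewrite divn_gt0.
by rewrite -ltnS ltn_divLR //; lia.
Qed.

Local Close Scope R_scope.

Lemma leq_term lo hi i (F : nat -> nat) : lo <= i < hi -> F i <= \sum_(lo <= j < hi) F j.
Proof.
move/andP=> [h1 h2]; rewrite (big_cat_nat (n := i)) ?(ltnW h2) // [\sum_(i <= _ < hi) _]big_ltn //=.

lia.
Qed.

Lemma sum_eq_lt n k (b : bool) : \sum_(0 <= m < n) (b && (m == k)) = b && (k < n).
Proof.
elim: n => [|n IH]; first by rewrite big_geq // andbF.
rewrite big_nat_recr //= IH; case: b {IH} => //=.
by case: (ltngtP k n) => H; lia.
Qed.

Lemma SP_le n : SP_count n <= \sum_(2 <= a < n) \sum_(0 <= p < n) (prime p && (p * a ^ 2 < n)).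
Proof.
have -> : SP_count n = \sum_(0 <= m < n | is_SP m) 1.
  by rewrite /SP_count big_mkord -sum1_card.
apply: (@leq_trans (\sum_(0 <= m < n) \sum_(2 <= a < n) \sum_(0 <= p < n)
                      (prime p && (m == p * a ^ 2)))).
  rewrite big_mkcond /= big_nat_cond [X in _ <= X]big_nat_cond.
  apply: leq_sum => m /andP[/andP[_ mn] _].
  case: (boolP (is_SP m)) => // /is_SPP [p [a [pp a2 Hm]]].
  have a0 : 0 < a by lia.
  have pa : p <= m by rewrite Hm leq_pmulr // expn_gt0 a0.
  have aa : a <= m by rewrite Hm; apply: leq_trans (leq_pmull _ (prime_gt0 pp)); rewrite -[X in X <= _]expn1 leq_pexp2l.
  apply: leq_trans (leq_term 2 n a (fun a => \sum_(0 <= p < n) (prime p && (m == p * a ^ 2))) _).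
    apply: leq_trans (leq_term 0 n p (fun p => prime p && (m == p * a ^ 2)) _).
      by rewrite pp Hm eqxx.
    by apply/andP; split => //; lia.
  by apply/andP; split => //; lia.
rewrite exchange_big_nat; apply: leq_sum => a _.
rewrite exchange_big_nat; apply: leq_sum => p _.
by rewrite sum_eq_lt.
Qed.

Local Close Scope R_scope.

Lemma Rplus_assoc' : associative Rplus. Proof. move=> *; lra. Qed.
HB.instance Definition _ := Monoid.isComLaw.Build R R0 Rplus Rplus_assoc' Rplus_comm Rplus_0_l.

Local Open Scope R_scope.

Lemma INR_add (a b : nat) : INR (a + b)%N = INR a + INR b.
Proof. by rewrite -plusE plus_INR. Qed.
Lemma INR_mul (a b : nat) : INR (a * b)%N = INR a * INR b.
Proof. by rewrite -multE mult_INR. Qed.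

Lemma INR_sum (I : Type) (r : seq I) (P : pred I) (F : I -> nat) :
  INR (\sum_(i <- r | P i) F i)%N = \big[Rplus/R0]_(i <- r | P i) INR (F i).
Proof. exact: (big_morph INR INR_add). Qed.

Lemma sumR_le (I : Type) (r : seq I) (P : pred I) (F G : I -> R) :
  (forall i, P i -> F i <= G i) ->
  \big[Rplus/R0]_(i <- r | P i) F i <= \big[Rplus/R0]_(i <- r | P i) G i.
Proof.
move=> H; apply: (big_ind2 (fun x y => x <= y)); [lra | move=> *; lra | exact: H].
Qed.

Lemma sumR_mull (I : Type) (r : seq I) (P : pred I) (F : I -> R) c :
  \big[Rplus/R0]_(i <- r | P i) (c * F i) = c * \big[Rplus/R0]_(i <- r | P i) F i.
Proof.
apply: (big_ind2 (fun x y => x = c * y)); [lra | move=> ? ? ? ? -> ->; lra | by []].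
Qed.

Lemma sumR_ge0 (I : Type) (r : seq I) (P : pred I) (F : I -> R) :
  (forall i, P i -> 0 <= F i) -> 0 <= \big[Rplus/R0]_(i <- r | P i) F i.
Proof. move=> H; apply: (big_ind (fun x => 0 <= x)); [lra | move=> *; lra | exact: H]. Qed.

Lemma sumR_const m n (c : R) : \big[Rplus/R0]_(m <= i < n) c = INR (n - m) * c.
Proof.
elim: n => [|n IH]; first by rewrite big_geq // sub0n /=; lra.
case: (leqP m n) => Hmn.
  rewrite big_nat_recr //= IH subSn // S_INR; lra.
by rewrite big_geq // (_ : (n.+1 - m = 0)%N) /=; [lra | lia].
Qed.

Lemma sumR_single K j c : (j < K)%N ->
  \big[Rplus/R0]_(0 <= q < K) (if q == j then c else 0) = c.
Proof.
elim: K => [//|K IH] jK.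
rewrite big_nat_recr //=; case: (ltngtP j K) => H.
- rewrite IH //; case: (@eqP _ K j) => ?; [lia | lra].
- lia.
- move: H jK => <- jK; rewrite big1_seq; first by case: (@eqP _ j j); lra.
  move=> q /andP[_]; rewrite mem_index_iota => /andP[_ qj].
  by case: (@eqP _ q j) => ? //; lia.
Qed.

Local Close Scope R_scope.

Local Open Scope R_scope.

Lemma ln_le_sub1 x : 0 < x -> ln x <= x - 1.
Proof. move=> x0; have := exp_ineq1_le (ln x); rewrite exp_ln //; lra. Qed.

Lemma ln_diff_le a b : 0 < a -> 0 < b -> ln b - ln a <= (b - a) / a.
Proof.
move=> a0 b0.
have -> : b = a * (b / a) by field; lra.
rewrite ln_mult //; last by apply: Rdiv_lt_0_compat.
have := ln_le_sub1 (b / a) (Rdiv_lt_0_compat _ _ b0 a0).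
have -> : (a * (b / a) - a) / a = b / a - 1 by field; lra.
lra.
Qed.

Lemma ln_diff_ge a b : 0 < a -> 0 < b -> (b - a) / b <= ln b - ln a.
Proof.
move=> a0 b0; have := @ln_diff_le b a b0 a0.
have -> : (a - b) / b = - ((b - a) / b) by field; lra.
lra.
Qed.

Lemma INR_lit (n : nat) : INR n = IZR (Z.of_nat n).
Proof. exact: INR_IZR_INZ. Qed.

Definition K0 := 30 * ln 30 - 15 * ln 15 - 10 * ln 10 - 6 * ln 6.

Lemma ln_prod a b : 0 < a -> 0 < b -> ln (a * b) = ln a + ln b.
Proof. exact: ln_mult. Qed.

Lemma K0_bounds : 26.8 <= K0 <= 28.5.
Proof.
have e30 : ln 30 = ln 2 + ln 3 + ln 5.
  by rewrite (_ : 30 = 2 * 3 * 5) ?ln_prod; lra.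
have e15 : ln 15 = ln 3 + ln 5 by rewrite (_ : 15 = 3 * 5) ?ln_prod; lra.
have e10 : ln 10 = ln 2 + ln 5 by rewrite (_ : 10 = 2 * 5) ?ln_prod; lra.
have e6 : ln 6 = ln 2 + ln 3 by rewrite (_ : 6 = 2 * 3) ?ln_prod; lra.
have e16 : ln 16 = 4 * ln 2 by rewrite (_ : 16 = 2 * 2 * 2 * 2) ?ln_prod; lra.
have e25 : ln 25 = 2 * ln 5 by rewrite (_ : 25 = 5 * 5) ?ln_prod; lra.
have e24 : ln 24 = 3 * ln 2 + ln 3 by rewrite (_ : 24 = 2 * 2 * 2 * 3) ?ln_prod; lra.
have e81 : ln 81 = 4 * ln 3 by rewrite (_ : 81 = 3 * 3 * 3 * 3) ?ln_prod; lra.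
have e80 : ln 80 = 4 * ln 2 + ln 5 by rewrite (_ : 80 = 2 * 2 * 2 * 2 * 5) ?ln_prod; lra.
have u1 := @ln_diff_le 15 16 ltac:(lra) ltac:(lra).
have u2 := @ln_diff_ge 15 16 ltac:(lra) ltac:(lra).
have v1 := @ln_diff_le 24 25 ltac:(lra) ltac:(lra).
have v2 := @ln_diff_ge 24 25 ltac:(lra) ltac:(lra).
have w1 := @ln_diff_le 80 81 ltac:(lra) ltac:(lra).
have w2 := @ln_diff_ge 80 81 ltac:(lra) ltac:(lra).
rewrite e16 e15 in u1 u2; rewrite e25 e24 in v1 v2; rewrite e81 e80 in w1 w2.
rewrite /K0 e30 e15 e10 e6.
split; lra.
Qed.

Definition lnfact (N : nat) := ln (INR N`!).

Lemma INR_pos (n : nat) : (0 < n)%N -> 0 < INR n.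
Proof. move=> h; apply: lt_0_INR; apply/ltP. done. Qed.

Arguments INR_pos {n}.

Lemma lnfactS N : lnfact N.+1 = ln (INR N.+1) + lnfact N.
Proof.
rewrite /lnfact factS INR_mul ln_mult //; apply: INR_pos => //; exact: fact_gt0.
Qed.

Lemma ln_step_le (N : nat) : (0 < N)%N -> INR N * (ln (INR N.+1) - ln (INR N)) <= 1.
Proof.
move=> N0; have h := INR_pos N0; have := @ln_diff_le (INR N) (INR N.+1) h ltac:(rewrite S_INR; lra).
rewrite S_INR => H.
have : INR N * (ln (INR N + 1) - ln (INR N)) <= INR N * ((INR N + 1 - INR N) / INR N).
  by apply: Rmult_le_compat_l; lra.
have -> : INR N * ((INR N + 1 - INR N) / INR N) = 1 by field; lra.
done.
Qed.

Lemma ln_step_ge (N : nat) : (0 < N)%N -> 1 <= INR N.+1 * (ln (INR N.+1) - ln (INR N)).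
Proof.
move=> N0; have h := INR_pos N0; have := @ln_diff_ge (INR N) (INR N.+1) h ltac:(rewrite S_INR; lra).
rewrite S_INR => H.
have : INR N.+1 * ((INR N + 1 - INR N) / (INR N + 1)) <= INR N.+1 * (ln (INR N + 1) - ln (INR N)).
  by apply: Rmult_le_compat_l; [apply: pos_INR | lra].
rewrite S_INR.
have -> : (INR N + 1) * ((INR N + 1 - INR N) / (INR N + 1)) = 1 by field; lra.
done.
Qed.

Arguments ln_step_le {N}.
Arguments ln_step_ge {N}.

Lemma stirling (N : nat) : (0 < N)%N ->
  INR N * ln (INR N) - INR N <= lnfact N <= INR N * ln (INR N) - INR N + ln (INR N) + 1.
Proof.
elim: N => [//|N IH] _.
case: N IH => [|N] IH.
  rewrite /lnfact /= ln_1; lra.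
have [IH1 IH2] := IH isT.
have s1 := ln_step_le (isT : (0 < N.+1)%N).
have s2 := ln_step_ge (isT : (0 < N.+1)%N).
rewrite lnfactS.
rewrite [INR N.+2]S_INR in s1 s2 *.
split; nra.
Qed.

Definition lterm (n p : nat) : R := if prime p then ln (INR p) * INR (logn p n) else 0.

Lemma ln_decomp X n : (0 < n)%N -> (n <= X)%N ->
  ln (INR n) = \big[Rplus/R0]_(0 <= p < X.+1) lterm n p.
Proof.
elim/ltn_ind: n => n IH n0 nX.
case: (ltngtP n 1) => H; first by lia.
- set p0 := pdiv n.
  have pp : prime p0 by apply: pdiv_prime.
  have p0n : (p0 <= n)%N by apply: pdiv_leq.
  set n' := (n %/ p0)%N.
  have En : n = (n' * p0)%N by rewrite divnK // pdiv_dvd.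
  have n'0 : (0 < n')%N by move: n0; rewrite En muln_gt0 => /andP[].
  have n'n : (n' < n)%N by apply: ltn_Pdiv => //; apply: prime_gt1.
  have i1 : 0 < INR n' by apply: INR_pos.
  have i2 : 0 < INR p0 by apply: INR_pos; apply: prime_gt0.
  rewrite [in LHS]En INR_mul ln_mult //.
  rewrite (IH n') //; last by lia.
  have -> : \big[Rplus/R0]_(0 <= p < X.+1) lterm n p =
            \big[Rplus/R0]_(0 <= p < X.+1) (lterm n' p + (if p == p0 then ln (INR p0) else 0)).
    apply: eq_bigr => p _; rewrite /lterm En.
    case: (boolP (prime p)) => pr.
      rewrite (lognM p n'0 (prime_gt0 pp)) (logn_prime p pp) INR_add.
      by case: (@eqP _ p p0) => [->|_] /=; lra.
    by case: (@eqP _ p p0) => [E|_]; [move: pr; rewrite E pp | lra].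
  rewrite big_split /= sumR_single; [lra | lia].
- subst n; rewrite ln_1 big1 // => p _; rewrite /lterm logn1 /=; case: prime; lra.
Qed.

Lemma lnfact_decomp X N : (N <= X)%N ->
  lnfact N = \big[Rplus/R0]_(0 <= p < X.+1) lterm N`! p.
Proof.
elim: N => [|N IH] NX.
  rewrite /lnfact /= ln_1 big1 // => p _; rewrite /lterm logn1 /=; case: prime; lra.
rewrite lnfactS IH; last by lia.
rewrite (@ln_decomp X N.+1) //.
rewrite -big_split /=; apply: eq_bigr => p _; rewrite /lterm factS lognM ?fact_gt0 //.
case: prime; rewrite ?INR_add; lra.
Qed.

Local Close Scope R_scope.

Local Open Scope R_scope.

Lemma INR_exp (p e : nat) : INR (p ^ e)%N = INR p ^ e.
Proof. elim: e => [|e IH] //=; by rewrite expnS INR_mul IH. Qed.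

Lemma ln_le_mono x y : 0 < x -> x <= y -> ln x <= ln y.
Proof.
move=> x0 xy; case: (Rle_lt_or_eq_dec _ _ xy) => [h|->]; last lra.
by apply: Rlt_le; apply: ln_increasing.
Qed.

Lemma ln_nonneg (p : nat) : (0 < p)%N -> 0 <= ln (INR p).
Proof.
move=> p0; rewrite -ln_1; apply: ln_le_mono; first lra.
by apply: (le_INR 1); apply/leP.
Qed.

Lemma leINR (a b : nat) : (a <= b)%N -> INR a <= INR b.
Proof. by move=> h; apply: le_INR; apply/leP. Qed.

Definition Dm m := lnfact (30 * m) + lnfact m - lnfact (15 * m) - lnfact (10 * m) - lnfact (6 * m).
Definition gterm m p := if prime p then ln (INR p) * INR (Gp p m) else 0.

Lemma D_eq m : Dm m = \big[Rplus/R0]_(0 <= p < (30 * m).+1) gterm m p.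
Proof.
rewrite /Dm !(@lnfact_decomp (30 * m)) //; try lia.
have H : \big[Rplus/R0]_(0 <= p < (30 * m).+1) (lterm (30 * m)`! p + lterm m`! p) =
         \big[Rplus/R0]_(0 <= p < (30 * m).+1)
            (lterm (15 * m)`! p + lterm (10 * m)`! p + lterm (6 * m)`! p + gterm m p).
  apply: eq_bigr => p _; rewrite /lterm /gterm; case: (boolP (prime p)) => pp; last lra.
  have := congr1 INR (legendre_combo p m pp); rewrite !INR_add => E.
  rewrite -!Rmult_plus_distr_l E; lra.
rewrite !big_split /= in H; lra.
Qed.

Definition pterm y p := if prime p then ln (INR p) * INR (trunc_log p y) else 0.
Definition psiN K y := \big[Rplus/R0]_(0 <= p < K) pterm y p.
Definition psi y := psiN y.+1 y.

Lemma psiN_ext K y : (y < K)%N -> psiN K y = psi y.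
Proof.
move=> yK; rewrite /psi /psiN [LHS](big_cat_nat (n := y.+1)) //= [X in Rplus _ X]big1_seq ?Rplus_0_r //.
move=> p /andP[_]; rewrite mem_index_iota => /andP[yp _].
rewrite /pterm; case: prime; last by [].
have -> : trunc_log p y = 0%N.
  apply/eqP; rewrite trunc_log_eq0; apply/orP; right; lia.
rewrite /=; lra.
Qed.

Lemma D_le m : Dm m <= psi (30 * m).
Proof.
rewrite D_eq /psi /psiN; apply: sumR_le => p _; rewrite /gterm /pterm.
case: (boolP (prime p)) => pp; last lra.
apply: Rmult_le_compat_l; first exact: (@ln_nonneg p (prime_gt0 pp)).
exact: leINR (G_le p m pp).
Qed.

Lemma D_ge m : psi (30 * m) <= Dm m + psi (5 * m).
Proof.
rewrite -(@psiN_ext (30 * m).+1 (5 * m)); last lia.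
rewrite D_eq /psi /psiN -big_split /=; apply: sumR_le => p _; rewrite /gterm /pterm.
case: (boolP (prime p)) => pp; last lra.
rewrite -Rmult_plus_distr_l -INR_add.
apply: Rmult_le_compat_l; first exact: (@ln_nonneg p (prime_gt0 pp)).
exact: leINR (G_ge p m pp).
Qed.

Lemma psi_mono y y' : (y <= y')%N -> psi y <= psi y'.
Proof.
move=> yy; rewrite -(@psiN_ext y'.+1 y) //; apply: sumR_le => p _; rewrite /pterm.
case: (boolP (prime p)) => pp; last lra.
apply: Rmult_le_compat_l; first exact: (@ln_nonneg p (prime_gt0 pp)).
exact: leINR (leq_trunc_log _ yy).
Qed.

Lemma pterm_le y p : (0 < y)%N -> pterm y p <= INR (prime p) * ln (INR y).
Proof.
move=> y0; have ly := @ln_nonneg y y0.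
rewrite /pterm; case: (boolP (prime p)) => pp /=; last lra.
have p1 := prime_gt1 pp.
have : INR (p ^ trunc_log p y)%N <= INR y by apply: leINR; apply: trunc_logP.
rewrite INR_exp => H.
have Hp : 0 < INR p by apply: INR_pos; apply: prime_gt0.
have E := @ln_pow (INR p) Hp (trunc_log p y).
have : ln (INR p ^ trunc_log p y) <= ln (INR y).
  by apply: ln_le_mono => //; apply: pow_lt.
lra.
Qed.

Local Close Scope R_scope.

Arguments leINR {a b}.

Lemma sum_pos_le K y : \sum_(0 <= p < K) ((0 < p) && (p <= y)) = minn K.-1 y.
Proof.
elim: K => [|K IH]; first by rewrite big_geq // min0n.
rewrite big_nat_recr //= IH.
case: K IH => [|K] IH /=; first by rewrite min0n.
case: (leqP K.+1 y) => H; lia.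
Qed.

Definition cntQ K y := \sum_(0 <= p < K) (prime p && (p <= y)).

Lemma cntQ_le K y : (cntQ K y <= y)%N.
Proof.
apply: (@leq_trans (\sum_(0 <= p < K) ((0 < p) && (p <= y)))).
  apply: leq_sum => p _; case: (boolP (prime p)) => pp //=.
  by rewrite prime_gt0.
rewrite sum_pos_le; exact: geq_minr.
Qed.

Local Open Scope R_scope.

Lemma psi_pc K y : (0 < y)%N ->
  psiN K y <= INR (\sum_(0 <= p < K) prime p) * ln (INR y).
Proof.
move=> y0; rewrite INR_sum /psiN Rmult_comm -sumR_mull.
apply: sumR_le => p _; rewrite Rmult_comm; exact: pterm_le.
Qed.

Lemma psi_triv y : psi y <= INR y * INR y.
Proof.
case: y => [|y].
  rewrite /psi /psiN big_nat1 /pterm /=; lra.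
have y0 : (0 < y.+1)%N by [].
have := @psi_pc y.+2 y.+1 y0.
have : (\sum_(0 <= p < y.+2) prime p <= y.+2)%N.
  apply: leq_trans (_ : \sum_(0 <= p < y.+2) 1 <= _)%N.
    by apply: leq_sum => p _; apply: leq_b1.
  by rewrite sum_nat_const_nat muln1 subn0.
move/leINR => H1 H2.
have H3 := @ln_le_sub1 _ (INR_pos y0).
have H4 := @ln_nonneg _ y0.
rewrite /psi; rewrite [INR y.+2]S_INR in H1.
nra.
Qed.

Lemma pterm_ge0 y p : 0 <= pterm y p.
Proof.
rewrite /pterm; case: (boolP (prime p)) => pp; last lra.
apply: Rmult_le_pos; [exact: (@ln_nonneg _ (prime_gt0 pp)) | exact: pos_INR].
Qed.

Lemma Qbound K y z : (2 <= z)%N -> (y < K)%N ->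
  INR (cntQ K y) <= INR z + psi y / ln (INR z).
Proof.
move=> z2 yK.
have lz : 0 < ln (INR z).
  rewrite -ln_1; apply: ln_increasing; first lra.
  by apply: (lt_INR 1); apply/ltP.
apply: (@Rle_trans _ (INR (cntQ K z) + / ln (INR z) * psiN K y)); last first.
  rewrite (@psiN_ext K y yK); have := leINR (cntQ_le K z).
  have : psi y / ln (INR z) = / ln (INR z) * psi y by rewrite /Rdiv Rmult_comm.
  lra.
rewrite /cntQ /psiN !INR_sum -sumR_mull -big_split /=.
apply: sumR_le => p _.
have := pterm_ge0 y p; have := Rinv_0_lt_compat _ lz => iz pt.
case: (boolP (prime p)) => pp /=; last nra.
case: (leqP p z) => pz /=.
  case: (p <= y)%N => /=; nra.
case: (leqP p y) => py /=; last nra.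
rewrite /pterm pp.
have t1 : (1 <= trunc_log p y)%N by rewrite trunc_log_gt0 prime_gt1 //=; lia.
have t1' := leINR t1.
have lp : ln (INR z) < ln (INR p).
  apply: ln_increasing; first by apply: INR_pos; lia.
  by apply: lt_INR; apply/ltP.
have : ln (INR z) * / ln (INR z) = 1 by field; lra.
rewrite /= in t1' => E.
have a : ln (INR z) <= ln (INR p) * INR (trunc_log p y) by nra.
have b : / ln (INR z) * ln (INR z) <= / ln (INR z) * (ln (INR p) * INR (trunc_log p y)).
  by apply: Rmult_le_compat_l; lra.
lra.
Qed.

Local Close Scope R_scope.

Arguments leINR {a b}.
Arguments psi_mono {y y'}.
Arguments ln_le_sub1 {x}.
Arguments ln_nonneg {p}.

Local Open Scope R_scope.

Lemma INRc (c m : nat) : INR (c * m)%N = INR c * INR m.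
Proof. exact: INR_mul. Qed.

Lemma INR30 : INR 30 = 30. Proof. rewrite INR_IZR_INZ; reflexivity. Qed.
Lemma INR15 : INR 15 = 15. Proof. rewrite INR_IZR_INZ; reflexivity. Qed.
Lemma INR10 : INR 10 = 10. Proof. rewrite INR_IZR_INZ; reflexivity. Qed.
Lemma INR6 : INR 6 = 6. Proof. rewrite INR_IZR_INZ; reflexivity. Qed.
Lemma INR5 : INR 5 = 5. Proof. rewrite INR_IZR_INZ; reflexivity. Qed.

Lemma D_bounds m : (0 < m)%N ->
  K0 * INR m - 3 * ln (INR (30 * m)) - 3 <= Dm m <= K0 * INR m + 2 * ln (INR (30 * m)) + 2.
Proof.
move=> m0.
have M0 := INR_pos m0.
have L : forall c : R, 0 < c -> ln (c * INR m) = ln c + ln (INR m).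
  by move=> c c0; rewrite ln_mult.
have [a1 a2] := @stirling (30 * m) ltac:(lia).
have [b1 b2] := @stirling m m0.
have [c1 c2] := @stirling (15 * m) ltac:(lia).
have [d1 d2] := @stirling (10 * m) ltac:(lia).
have [e1 e2] := @stirling (6 * m) ltac:(lia).
rewrite !INRc ?INR30 ?INR15 ?INR10 ?INR6 !L in a1 a2 c1 c2 d1 d2 e1 e2; try lra.
rewrite /Dm !INRc INR30 L; last lra.
have l15 : ln 15 <= ln 30 by apply: ln_le_mono; lra.
have l10 : ln 10 <= ln 30 by apply: ln_le_mono; lra.
have l6 : ln 6 <= ln 30 by apply: ln_le_mono; lra.
have l30 : 0 <= ln 30 by rewrite -ln_1; apply: ln_le_mono; lra.
rewrite /K0; split; lra.
Qed.

Lemma ln_le_sqrt x : 0 < x -> ln x <= 2 * sqrt x.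
Proof.
move=> x0; have s0 := sqrt_lt_R0 _ x0.
have E : ln x = 2 * ln (sqrt x).
  by rewrite -{1}(sqrt_sqrt x) ?ln_mult; lra.
have := @ln_le_sub1 _ s0; lra.
Qed.

Lemma INR200 : INR (200 * 200)%N = 40000.
Proof. rewrite INRc INR_IZR_INZ /=; lra. Qed.

Definition Bc : R := 1600000000.

Lemma psi_upper y : psi y <= 6 / 5 * INR y + Bc.
Proof.
elim/ltn_ind: y => y IH.
have Y0 := pos_INR y.
case: (leqP y (200 * 200)) => Hy.
  have := leINR Hy; rewrite INR200 => H.
  have := psi_triv y; rewrite /Bc; nra.
set m := (y %/ 30).+1.
have m0 : (0 < m)%N by [].
have h1 : (y <= 30 * m)%N by rewrite /m; lia.
have h2 : (30 * m <= y + 30)%N by rewrite /m; lia.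
have h3 : (5 * m < y)%N by rewrite /m; lia.
have P1 := psi_mono h1.
have P2 := D_ge m.
have [_ P3] := @D_bounds m m0.
have P4 := IH _ h3.
have := leINR h2; rewrite INRc INR30 INR_add INR30 => H2.
rewrite INRc INR5 in P4.
have Yb : 40000 < INR y by rewrite -INR200; apply: lt_INR; apply/ltP.
have M0 := INR_pos m0.
have l1 : ln (INR (30 * m)) <= ln (2 * INR y).
  by apply: ln_le_mono; rewrite INRc INR30; lra.
have l2 := @ln_le_sqrt (2 * INR y) ltac:(lra).
set s := sqrt (2 * INR y) in l2.
have s2 : s * s = 2 * INR y by rewrite /s sqrt_sqrt; lra.
have s0 : 0 <= s by rewrite /s; apply: sqrt_pos.
have s200 : 200 <= s by nra.
have [_ K1] := K0_bounds.
have : (s - 200) * s >= 0 by nra.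
rewrite /Bc in P4 *.
nra.
Qed.

Local Close Scope R_scope.

Arguments leINR {a b}.
Arguments psi_mono {y y'}.
Arguments ln_le_sub1 {x}.
Arguments ln_nonneg {p}.

Local Open Scope R_scope.

Lemma psi_lower y : (30 <= y)%N -> 89 / 100 * INR y - 30 - 3 * ln (INR y) <= psi y.
Proof.
move=> y30.
set m := (y %/ 30)%N.
have m0 : (0 < m)%N by rewrite /m; lia.
have h1 : (30 * m <= y)%N by rewrite /m; lia.
have h2 : (y < 30 * m + 30)%N by rewrite /m; lia.
have P1 := psi_mono h1.
have P2 := D_le m.
have [P3 _] := @D_bounds m m0.
have := leINR h1; rewrite INRc INR30 => H1.
have := lt_INR _ _ (elimT ltP h2); rewrite INR_add INRc INR30 => H2.
have M0 := INR_pos m0.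
have l1 : ln (INR (30 * m)) <= ln (INR y).
  by apply: ln_le_mono; rewrite INRc INR30; lra.
have [K1 _] := K0_bounds.
nra.
Qed.

Lemma pc_sum n : prime_count n = (\sum_(0 <= p < n) prime p)%N.
Proof.
rewrite /prime_count -sum1_card big_mkord /=.
rewrite big_mkcond; apply: eq_bigr => i _; rewrite inE /=; by case: prime.
Qed.

Lemma pc_lower n : (31 <= n)%N ->
  89 / 100 * INR n.-1 - 30 - 3 * ln (INR n.-1) <= INR (prime_count n) * ln (INR n.-1).
Proof.
move=> n31.
have := @psi_lower n.-1 ltac:(lia).
rewrite -(@psiN_ext n n.-1); last lia.
have := @psi_pc n n.-1 ltac:(lia).
rewrite pc_sum; lra.
Qed.

Lemma sumR_recr m n (F : nat -> R) : (m <= n)%N ->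
  \big[Rplus/R0]_(m <= i < n.+1) F i = \big[Rplus/R0]_(m <= i < n) F i + F n.
Proof. by move=> h; rewrite big_nat_recr. Qed.

Lemma inv_sq_tail (A K : nat) : (1 <= A)%N -> (A < K)%N ->
  \big[Rplus/R0]_(A.+1 <= a < K) (/ (INR a * INR a)) + 2 / (2 * INR K - 1) <= 2 / (2 * INR A + 1).
Proof.
move=> A1; elim: K => [//|K IH] HK.
case: (ltngtP A K) => H; [ | lia | ].
- rewrite sumR_recr; last by lia.
  have := IH H.
  have K1 : 1 <= INR K by apply: (leINR (_ : (1 <= K)%N)); lia.
  have key : / (INR K * INR K) + 2 / (2 * INR K.+1 - 1) <= 2 / (2 * INR K - 1).
    rewrite S_INR.
    have e1 : 0 < INR K * INR K by nra.
    apply: (Rmult_le_reg_r ((INR K * INR K) * (2 * INR K + 1) * (2 * INR K - 1))).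
      apply: Rmult_lt_0_compat; [apply: Rmult_lt_0_compat|]; lra.
    have -> : (/ (INR K * INR K) + 2 / (2 * (INR K + 1) - 1)) *
              (INR K * INR K * (2 * INR K + 1) * (2 * INR K - 1))
              = (2 * INR K + 1) * (2 * INR K - 1) + 2 * (INR K * INR K) * (2 * INR K - 1).
      field; lra.
    have -> : 2 / (2 * INR K - 1) * (INR K * INR K * (2 * INR K + 1) * (2 * INR K - 1))
              = 2 * (INR K * INR K) * (2 * INR K + 1).
      field; lra.
    nra.
  lra.
- have -> : A = K by lia.
  rewrite big_geq // S_INR (_ : 2 * (INR K + 1) - 1 = 2 * INR K + 1); lra.
Qed.

Lemma final_real (L L1 n A lz X1 X2 PC SP : R) :
  40000 <= L -> (L / 8) ^ 8 <= n ->
  (L - 1) * (L - 1) <= A -> A <= 4 * (L * L) ->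
  L - 1 - 12 * sqrt L <= lz ->
  0 <= X1 -> 0 <= X2 ->
  X1 * A <= 2 * n -> X2 * lz <= 39 / 50 * n + Bc * A ->
  SP <= X1 + X2 ->
  0 < L1 -> L1 <= L -> 0 <= PC ->
  89 / 100 * (n - 1) - 30 - 3 * L1 <= PC * L1 ->
  SP < PC.
Proof.
move=> HL Hn HA1 HA2 Hlz HX1 HX2 HX1A HX2A HSP HL1 HL1L HPC HPCL.
have s2 : sqrt L * sqrt L = L by apply: sqrt_sqrt; lra.
have s0 : 0 <= sqrt L by apply: sqrt_pos.
have s200 : 200 <= sqrt L by nra.
have lzb : 93 / 100 * L <= lz.
  have : (sqrt L - 200) * sqrt L >= 0 by nra.
  nra.
have Ab : 2000 * L <= A by nra.
have nb : 10000000000000 * (L * L) <= n.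
  set u := L / 8.
  have u0 : 5000 <= u by rewrite /u; lra.
  have u6 : 5000 ^ 6 <= u ^ 6 by apply: pow_incr; lra.
  have e8 : u ^ 8 = u ^ 6 * (u * u) by ring.
  have eL : L * L = 64 * (u * u) by rewrite /u; field.
  have uu : 0 <= u * u by nra.
  have : 5000 ^ 6 * (u * u) <= u ^ 6 * (u * u) by apply: Rmult_le_compat_r.
  rewrite eL; rewrite e8 in Hn; lra.
have LL : 40000 * L <= L * L by nra.
have X1L : X1 * L <= n / 1000.
  have : X1 * (2000 * L) <= X1 * A by apply: Rmult_le_compat_l.
  lra.
have X2L : X2 * L <= 8398 / 10000 * n.
  have : X2 * (93 / 100 * L) <= X2 * lz by apply: Rmult_le_compat_l.
  rewrite /Bc in HX2A.
  lra.
have SPL : SP * L <= 8408 / 10000 * n.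
  have : SP * L <= (X1 + X2) * L by apply: Rmult_le_compat_r; lra.
  lra.
have PCL : 85 / 100 * n <= PC * L.
  have : PC * L1 <= PC * L by apply: Rmult_le_compat_l.
  lra.
have : SP * L < PC * L by lra.
move=> h; apply: (Rmult_lt_reg_r L); lra.
Qed.

Local Close Scope R_scope.

Arguments leINR {a b}.
Arguments psi_mono {y y'}.
Arguments ln_le_sub1 {x}.
Arguments ln_nonneg {p}.

Local Open Scope R_scope.

Lemma sumR_ltn m n (F : nat -> R) : (m < n)%N ->
  \big[Rplus/R0]_(m <= i < n) F i = F m + \big[Rplus/R0]_(m.+1 <= i < n) F i.
Proof. by move=> h; rewrite big_ltn. Qed.

Lemma sumR_cat m k n (F : nat -> R) : (m <= k)%N -> (k <= n)%N ->
  \big[Rplus/R0]_(m <= i < n) F i = \big[Rplus/R0]_(m <= i < k) F i + \big[Rplus/R0]_(k <= i < n) F i.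
Proof. by move=> h1 h2; rewrite (big_cat_nat (n := k)). Qed.

Lemma sumR_split (I : Type) (r : seq I) (P : pred I) (F G : I -> R) :
  \big[Rplus/R0]_(i <- r | P i) (F i + G i) =
  \big[Rplus/R0]_(i <- r | P i) F i + \big[Rplus/R0]_(i <- r | P i) G i.
Proof. by rewrite big_split. Qed.

Lemma exp_mul_nat (k : nat) x : exp (INR k * x) = exp x ^ k.
Proof.
elim: k => [|k IH]; first by rewrite /= Rmult_0_l exp_0.
rewrite S_INR Rmult_plus_distr_r Rmult_1_l exp_plus IH /=; ring.
Qed.

Lemma cnt_eq n a : (0 < a)%N -> (0 < n)%N ->
  (\sum_(0 <= p < n) (prime p && (p * a ^ 2 < n)))%N = cntQ n (n.-1 %/ a ^ 2).
Proof.
move=> a0 n0; rewrite /cntQ; apply: eq_bigr => p _; congr (_ && _).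
rewrite leq_divRL ?expn_gt0 ?a0 //.
set x := (p * a ^ 2)%N; lia.
Qed.

Lemma Ya_bound n a : (0 < a)%N -> INR (n.-1 %/ a ^ 2) <= INR n * / (INR a * INR a).
Proof.
move=> a0.
have h : (n.-1 %/ a ^ 2 * a ^ 2 <= n)%N.
  apply: leq_trans (leq_divM _ _) _; lia.
have := leINR h; rewrite INR_mul INR_exp /= Rmult_1_r => H.
have aa : 0 < INR a * INR a by have := INR_pos a0; nra.
apply: (Rmult_le_reg_r (INR a * INR a)) => //.
rewrite Rmult_assoc Rinv_l; lra.
Qed.

Local Close Scope R_scope.

Arguments leINR {a b}.
Arguments psi_mono {y y'}.
Arguments ln_le_sub1 {x}.
Arguments ln_nonneg {p}.

Local Open Scope R_scope.
Lemma main_real (n : nat) : (3 ^ (2 ^ 16) <= n)%N ->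
  (SP_count n < prime_count n)%N.
Proof.
move=> Hnn.
have n0 : (0 < n)%N by apply: leq_trans Hnn; rewrite expn_gt0.
have Hn : ln (INR (3 ^ (2 ^ 16))%N) <= ln (INR n).
  apply: ln_le_mono; [apply: INR_pos; rewrite expn_gt0 // | exact: leINR].
clear Hnn.
have l3 : 1 <= ln 3.
  rewrite -(ln_exp 1); apply: ln_le_mono; [apply: exp_pos | exact: exp_le_3].
have HL : 40000 <= ln (INR n).
  rewrite INR_exp ln_pow in Hn; last by rewrite INR_IZR_INZ /=; lra.
  rewrite INR_exp in Hn.
  have e : INR 2 ^ 16 = 65536 by rewrite INR_IZR_INZ /=; ring.
  rewrite e (_ : INR 3 = 3) in Hn; last by rewrite INR_IZR_INZ.
  nra.
clear Hn.
set L := ln (INR n) in HL *.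
have En : INR n = exp L by rewrite /L exp_ln //; exact: INR_pos.
have Hn8 : (L / 8) ^ 8 <= INR n.
  have e8 : exp L = exp (L / 8) ^ 8.
    rewrite -exp_mul_nat; f_equal; rewrite (_ : INR 8 = 8); [field | by rewrite INR_IZR_INZ].
  rewrite En e8; apply: pow_incr; split; first lra.
  have := exp_ineq1_le (L / 8); lra.
set t := trunc_log 2 n.
have t1 : (2 ^ t <= n)%N := trunc_logP (isT : (1 < 2)%N) n0.
have t2 : (n < 2 ^ t.+1)%N := trunc_log_ltn n (isT : (1 < 2)%N).
have l2a : / 2 < ln 2 := ln_lt_2.
have l2b : ln 2 <= 1 by have := @ln_le_sub1 2 ltac:(lra); lra.
have I2 : INR 2 = 2 by rewrite INR_IZR_INZ.
have LT1 : INR t * ln 2 <= L.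
  have := leINR t1; rewrite INR_exp I2 => h.
  rewrite -ln_pow; last lra.
  apply: ln_le_mono => //; apply: pow_lt; lra.
have LT2 : L < INR t.+1 * ln 2.
  have := lt_INR _ _ (elimT ltP t2); rewrite INR_exp I2 => h.
  rewrite -ln_pow; last lra.
  apply: ln_increasing => //; exact: INR_pos.
rewrite S_INR in LT2.
set T := INR t in LT1 LT2.
have T0 : 0 <= T by apply: pos_INR.
have T1 : T <= 2 * L by nra.
have T2 : L - 1 < T by nra.
have t2N : (2 <= t)%N.
  case: (leqP 2 t) => // h.
  have h1 : (t <= 1)%N by rewrite -ltnS.
  have := leINR h1; rewrite /= => h'.
  rewrite /T in T2; lra.
set A := (t * t)%N.
have IA : INR A = T * T by rewrite /A INR_mul.
have t0 : (0 < t)%N by apply: (leq_trans (isT : (1 <= 2)%N) t2N).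
have A2 : (2 <= A)%N by rewrite /A; apply: (leq_trans t2N); apply: leq_pmulr.
set z := (n %/ (A * A))%N.
have A0 : (0 < A)%N by apply: (leq_trans _ A2).
have AA0 : (0 < A * A)%N by rewrite muln_gt0 A0.
have IAA : INR (A * A) = (T * T) * (T * T) by rewrite INR_mul IA.
have hz1 : INR z * ((T * T) * (T * T)) <= INR n.
  by rewrite -IAA -INR_mul; apply: leINR; apply: leq_divM.
have hz2 : INR n < (INR z + 1) * ((T * T) * (T * T)).
  rewrite -IAA -S_INR -INR_mul; apply: lt_INR; apply/ltP; exact: ltn_ceil.
have big8 : 3 * ((T * T) * (T * T)) <= INR n.
  have u0 : 5000 <= L / 8 by lra.
  have u4 : 5000 ^ 4 <= (L / 8) ^ 4 by apply: pow_incr; lra.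
  have e8 : (L / 8) ^ 8 = (L / 8) ^ 4 * (L / 8) ^ 4 by ring.
  have TT : T * T <= 4 * (L * L) by nra.
  have TT0 : 0 <= T * T by nra.
  have T4 : (T * T) * (T * T) <= 16 * ((L * L) * (L * L)) by nra.
  have e4 : (L * L) * (L * L) = 4096 * (L / 8) ^ 4 by field.
  have : 5000 ^ 4 * (L / 8) ^ 4 <= (L / 8) ^ 4 * (L / 8) ^ 4.
    by apply: Rmult_le_compat_r; [apply: pow_le; lra | lra].
  lra.
have T4p : 0 < (T * T) * (T * T).
  have : 1 < T by lra.
  nra.
have z2 : 2 < INR z by nra.
have lzb : L - 1 - 12 * sqrt L <= ln (INR z).
  have zp : 0 < INR z by lra.
  have h1 : INR n <= 2 * INR z * ((T * T) * (T * T)) by nra.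
  have h2 : L <= ln 2 + ln (INR z) + 4 * ln T.
    have Tp : 0 < T by lra.
    have : ln (INR n) <= ln (2 * INR z * ((T * T) * (T * T))).
      apply: ln_le_mono => //; exact: INR_pos.
    rewrite !ln_mult //; try nra.
    rewrite /L; lra.
  have h3 := @ln_le_sqrt T ltac:(lra).
  have sT : sqrt T * sqrt T = T by apply: sqrt_sqrt.
  have sL : sqrt L * sqrt L = L by apply: sqrt_sqrt; lra.
  have sT0 : 0 <= sqrt T by apply: sqrt_pos.
  have sL0 : 0 <= sqrt L by apply: sqrt_pos.
  have h4 : sqrt T <= 3 / 2 * sqrt L by nra.
  lra.
set lz := ln (INR z) in lzb.
have lz0 : 0 < lz by rewrite /lz -ln_1; apply: ln_increasing; lra.
have ilz : 0 < / lz by apply: Rinv_0_lt_compat.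
have z2N : (2 <= z)%N.
  apply/ltP; apply: INR_lt; rewrite (_ : INR 1 = 1) //; lra.
have An : (A < n)%N.
  apply/ltP; apply: INR_lt; rewrite IA.
  have : 1 <= T * T by nra.
  nra.
have n31 : (31 <= n)%N.
  apply/leP; apply: INR_le.
  have -> : INR 31 = 31 by rewrite INR_IZR_INZ.
  have T1' : 1 <= T by lra.
  have h : T <= T * T by nra.
  have h' : T * T <= (T * T) * (T * T) by nra.
  lra.
have SPn := SP_le n.
have hA1 : (2 <= A.+1)%N by apply: leqW.
rewrite (big_cat_nat (n := A.+1)) in SPn; [ | exact: hA1 | exact: An].
have SPR := leINR SPn; rewrite INR_add !INR_sum in SPR.
have head : \big[Rplus/R0]_(2 <= a < A.+1)
       INR (\sum_(0 <= p < n) (prime p && (p * a ^ 2 < n)))%N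
     <= INR A * INR z + / lz * (6 / 5 * INR n * (13 / 20) + INR A * Bc).
  apply: (@Rle_trans _ (\big[Rplus/R0]_(2 <= a < A.+1)
      (INR z + (/ lz * (6 / 5 * INR n)) * / (INR a * INR a) + / lz * Bc))).
    rewrite big_nat_cond [X in _ <= X]big_nat_cond.
    apply: sumR_le => a /andP[/andP[a2 aA] _].
    have a0 : (0 < a)%N by apply: (leq_trans _ a2).
    rewrite cnt_eq //.
    have Yn : (n.-1 %/ a ^ 2 < n)%N by apply: (leq_ltn_trans (leq_div _ _)); lia.
    have Q := @Qbound n _ z z2N Yn.
    have U := psi_upper (n.-1 %/ a ^ 2).
    have Yb := @Ya_bound n a a0.
    have : psi (n.-1 %/ a ^ 2) / lz <= / lz * (6 / 5 * INR n * / (INR a * INR a) + Bc).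
      rewrite /Rdiv Rmult_comm; apply: Rmult_le_compat_l; lra.
    rewrite -/lz in Q; lra.
  rewrite !sumR_split sumR_mull !sumR_const.
  rewrite sumR_ltn // (_ : (A.+1 - 2)%N = A.-1) //; last by lia.
  have tl := @inv_sq_tail 2 A.+1 isT ltac:(lia).
  have ge : 0 <= 2 / (2 * INR A.+1 - 1).
    rewrite S_INR; apply: Rlt_le; apply: Rdiv_lt_0_compat; first lra.
    have := pos_INR A; lra.
  have e22 : INR 2 * INR 2 = 4 by rewrite I2; ring.
  rewrite e22 in tl *.
  have IAm : INR A.-1 <= INR A by apply: leINR; lia.
  have IAm0 : 0 <= INR A.-1 by apply: pos_INR.
  have n0R : 0 <= INR n by apply: pos_INR.
  have zR : 0 <= INR z by apply: pos_INR.
  set S := \big[Rplus/R0]_(3 <= a < A.+1) / (INR a * INR a) in tl *.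
  have S0 : S <= 2 / 5 by lra.
  have : / lz * (6 / 5 * INR n) * (/ 4 + S) <= / lz * (6 / 5 * INR n) * (13 / 20).
    apply: Rmult_le_compat_l; [apply: Rmult_le_pos; lra | lra].
  have : INR A.-1 * (/ lz * Bc) <= INR A * (/ lz * Bc).
    apply: Rmult_le_compat_r; [apply: Rmult_le_pos; rewrite /Bc; lra | lra].
  have : INR A.-1 * INR z <= INR A * INR z by apply: Rmult_le_compat_r.

  lra.
have tail : \big[Rplus/R0]_(A.+1 <= a < n)
       INR (\sum_(0 <= p < n) (prime p && (p * a ^ 2 < n)))%N
     <= INR n * (2 / (2 * INR A + 1)).
  apply: (@Rle_trans _ (\big[Rplus/R0]_(A.+1 <= a < n) (INR n * / (INR a * INR a)))).
    rewrite big_nat_cond [X in _ <= X]big_nat_cond.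
    apply: sumR_le => a /andP[/andP[aA an] _].
    have a0 : (0 < a)%N by lia.
    rewrite cnt_eq //.
    have := leINR (cntQ_le n (n.-1 %/ a ^ 2)).
    have := @Ya_bound n a a0.
    lra.
  rewrite sumR_mull.
  have tl := @inv_sq_tail A n ltac:(lia) An.
  have ge : 0 <= 2 / (2 * INR n - 1).
    apply: Rlt_le; apply: Rdiv_lt_0_compat; first lra.
    have := INR_pos n0; have : 1 <= INR n by apply: (leINR (_ : (1 <= n)%N)). lra.
  apply: Rmult_le_compat_l; [exact: pos_INR | lra].
have PCb := @pc_lower n n31.
have En1 : INR n.-1 = INR n - 1.
  by rewrite -{2}(prednK n0) S_INR; ring.
rewrite En1 in PCb.
have n31R : 31 <= INR n.
  have := leINR n31; rewrite (_ : INR 31 = 31) //; by rewrite INR_IZR_INZ.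
have L1p : 0 < ln (INR n - 1).
  rewrite -ln_1; apply: ln_increasing; lra.
have L1L : ln (INR n - 1) <= L by apply: ln_le_mono; lra.
have Afin : (L - 1) * (L - 1) <= INR A /\ INR A <= 4 * (L * L) by rewrite IA; split; nra.
have X1A : (INR A * INR z + INR n * (2 / (2 * INR A + 1))) * INR A <= 2 * INR n.
  rewrite IA.
  have e : INR n * (2 / (2 * (T * T) + 1)) * (T * T) = INR n * (2 * (T * T) / (2 * (T * T) + 1)).
    field; nra.
  have f : 2 * (T * T) / (2 * (T * T) + 1) <= 1.
    apply: (Rmult_le_reg_r (2 * (T * T) + 1)); first nra.
    rewrite /Rdiv Rmult_assoc Rinv_l; nra.
  have n0R : 0 <= INR n by apply: pos_INR.
  have : INR n * (2 * (T * T) / (2 * (T * T) + 1)) <= INR n * 1 by apply: Rmult_le_compat_l.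
  nra.
have X2A : / lz * (39 / 50 * INR n + Bc * INR A) * lz <= 39 / 50 * INR n + Bc * INR A.
  right; field; lra.
have PC0 : 0 <= INR (prime_count n) by apply: pos_INR.
have X10 : 0 <= INR A * INR z + INR n * (2 / (2 * INR A + 1)).
  have := pos_INR A; have := pos_INR z; have := pos_INR n => *.
  apply: Rplus_le_le_0_compat; first nra.
  apply: Rmult_le_pos => //; apply: Rlt_le; apply: Rdiv_lt_0_compat; lra.
have X20 : 0 <= / lz * (39 / 50 * INR n + Bc * INR A).
  apply: Rmult_le_pos; first lra.
  have := pos_INR A; have := pos_INR n; rewrite /Bc => *; nra.
have SPX : INR (SP_count n) <= (INR A * INR z + INR n * (2 / (2 * INR A + 1)))
                               + / lz * (39 / 50 * INR n + Bc * INR A).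
  have : 6 / 5 * INR n * (13 / 20) = 39 / 50 * INR n by field.
  have : / lz * (39 / 50 * INR n + Bc * INR A) = / lz * (39 / 50 * INR n) + / lz * (Bc * INR A) by ring.
  have : / lz * (6 / 5 * INR n * (13 / 20) + INR A * Bc) = / lz * (39 / 50 * INR n) + / lz * (Bc * INR A).
    field; lra.
  lra.
have := @final_real _ _ _ _ _ _ _ _ _ HL Hn8 (proj1 Afin) (proj2 Afin) lzb X10 X20 X1A X2A SPX L1p L1L PC0 PCb.
move/INR_lt/ltP; done.
Qed.

Local Close Scope R_scope.

Theorem corollary1 :
  exists N : nat, forall n : nat, N <= n -> SP_count n < prime_count n.
Proof. by exists (3 ^ (2 ^ 16))%N => n Hn; apply: main_real. Qed.

Local Close Scope R_scope.
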